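(* Let $G_l$ be a graph of order $n_l$, maximum degree $\Delta_l$ and minimum degree $\delta_l$, $l\in\{1,2\}$. Then: (i) For $i,j\in\{1,2\}$ with $i\neq j$ and every integer $k\in\{\Delta_j-\Delta_i,\dots,\Delta_i+\Delta_j-2\}$, $\phi_k^p(G_1\times G_2)\ge n_j\,\phi_{k-\Delta_j}^p(G_i)$. (ii) For all integers $k_1\in\{1-\delta_1,\dots,\Delta_1-2\}$ and $k_2\in\{1-\delta_2,\dots,\Delta_2-2\}$ and every integer $k\in\{k_1+k_2-1,\dots,\Delta_1+\Delta_2-2\}$, $$\phi_k^p(G_1\times G_2)\ge \phi_{k_1}^p(G_1)\phi_{k_2}^p(G_2)+\min\{n_1-\phi_{k_1}^p(G_1),\,n_2-\phi_{k_2}^p(G_2)\}.$$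
   Context: All graphs are finite and simple. For a graph $G=(V,E)$, a set $S\subseteq V$ and $v\in V$, let $\delta_S(v)=|\{u\in S: uv\in E\}|$, $\overline{S}=V\setminus S$, and let $\partial S$ be the set of vertices of $\overline S$ adjacent to at least one vertex of $S$. For an integer $k$, a non-empty set $S\subseteq V$ is a defensive $k$-alliance if $\delta_S(v)\ge \delta_{\overline S}(v)+k$ for every $v\in S$; an offensive $k$-alliance if $\delta_S(v)\ge \delta_{\overline S}(v)+k$ for every $v\in\partial S$; and a powerful $k$-alliance if it is both a defensive $k$-alliance and an offensive $(k+2)$-alliance. A set $X\subseteq V$ is a powerful $k$-alliance free set ($k$-paf set) if no powerful $k$-alliance $S$ satisfies $S\subseteq X$. $\phi_k^p(G)$ denotes the maximum cardinality of a $k$-paf set in $G$. The Cartesian product $G_1\times G_2$ of $G_1=(V_1,E_1)$, $G_2=(V_2,E_2)$ has vertex set $V_1\times V_2$, with $(a,b)$ adjacent to $(c,d)$ iff either $a=c$ and $bd\in E_2$, or $b=d$ and $ac\in E_1$. *)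

(* Defs.v *)
From mathcomp Require Import all_boot all_order all_algebra.
Set Implicit Arguments. Unset Strict Implicit. Unset Printing Implicit Defensive.
Import GRing.Theory Num.Theory.

Definition simple_graph (T : finType) (e : rel T) : Prop :=
  symmetric e /\ irreflexive e.

Definition deg_in (T : finType) (e : rel T) (S : {set T}) (v : T) : nat :=
  #|[set u in S | e v u]|.

Definition deg (T : finType) (e : rel T) (v : T) : nat := #|[set u | e v u]|.

Definition maxdeg (T : finType) (e : rel T) : nat := \max_(v : T) deg e v.
(* minimum degree; the seed #|T| is never attained for nonempty T, and gives 0 for empty T *)
Definition mindeg (T : finType) (e : rel T) : nat := \big[minn/#|T|]_(v : T) deg e v.

Definition boundary (T : finType) (e : rel T) (S : {set T}) : {set T} :=
  [set v in ~: S | [exists u in S, e v u]].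

Definition defensive_alliance (T : finType) (e : rel T) (k : int) (S : {set T}) : bool :=
  (S != set0) &&
  [forall v in S, ((deg_in e (~: S) v)%:Z + k <= (deg_in e S v)%:Z)%R].

Definition offensive_alliance (T : finType) (e : rel T) (k : int) (S : {set T}) : bool :=
  (S != set0) &&
  [forall v in boundary e S, ((deg_in e (~: S) v)%:Z + k <= (deg_in e S v)%:Z)%R].

Definition powerful_alliance (T : finType) (e : rel T) (k : int) (S : {set T}) : bool :=
  defensive_alliance e k S && offensive_alliance e (k + 2)%R S.

Definition paf_set (T : finType) (e : rel T) (k : int) (X : {set T}) : bool :=
  [forall S : {set T}, (S \subset X) ==> ~~ powerful_alliance e k S].

(* phi_k^p(G): maximum cardinality of a k-paf set (the empty set is always k-paf) *)
Definition phi_p (T : finType) (e : rel T) (k : int) : nat :=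
  \max_(X : {set T} | paf_set e k X) #|X|.

Definition cart_rel (T1 T2 : finType) (e1 : rel T1) (e2 : rel T2) : rel (T1 * T2) :=
  fun x y => ((x.1 == y.1) && e2 x.2 y.2) || ((x.2 == y.2) && e1 x.1 y.1).

(* Main.v *)
Require Import Defs.
From mathcomp Require Import all_boot all_order all_algebra zify.
Import GRing.Theory Num.Theory.
Set Implicit Arguments. Unset Strict Implicit. Unset Printing Implicit Defensive.

Lemma mindeg_le (T : finType) (e : rel T) v : mindeg e <= deg e v.
Proof. rewrite /mindeg. have := @Order.TotalTheory.bigmin_le _ nat T #|T| v (deg e). by []. Qed.

Lemma deg_le_max (T : finType) (e : rel T) v : deg e v <= maxdeg e.
Proof. exact: leq_bigmax. Qed.

Lemma deg_in_sub (T : finType) (e : rel T) (R R' : {set T}) v :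
  R \subset R' -> deg_in e R v <= deg_in e R' v.
Proof.
move=> sub; apply: subset_leq_card; apply/subsetP=> u; rewrite !inE.
by case/andP=> uR ->; rewrite andbT (subsetP sub).
Qed.

Lemma deg_in_le (T : finType) (e : rel T) (R : {set T}) v : deg_in e R v <= deg e v.
Proof.
apply: subset_leq_card; apply/subsetP=> u; rewrite !inE; by case/andP.
Qed.

Lemma deg_in_set1 (T : finType) (e : rel T) (irr : irreflexive e) a :
  deg_in e [set a] a = 0.
Proof.
rewrite /deg_in; apply/eqP; rewrite cards_eq0; apply/eqP; apply/setP=> u; rewrite !inE.
by case: (eqVneq u a) => [->|] //=; rewrite irr.
Qed.

Lemma deg_in_setC1 (T : finType) (e : rel T) (irr : irreflexive e) a :
  deg_in e (~: [set a]) a = deg e a.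
Proof.
rewrite /deg_in /deg; apply: eq_card=> u; rewrite !inE.
by case: (eqVneq u a) => [->|] //=; rewrite irr.
Qed.

Lemma deg_in_set0 (T : finType) (e : rel T) a : deg_in e set0 a = 0.
Proof. apply/eqP; rewrite cards_eq0; apply/eqP/setP=> u; by rewrite !inE. Qed.

Lemma deg_in_setT (T : finType) (e : rel T) a : deg_in e (~: set0) a = deg e a.
Proof. rewrite /deg_in /deg; apply: eq_card=> u; by rewrite !inE. Qed.

Definition row (T1 T2 : finType) (S : {set T1 * T2}) (b : T2) : {set T1} :=
  [set a | (a, b) \in S].
Definition col (T1 T2 : finType) (S : {set T1 * T2}) (a : T1) : {set T2} :=
  [set b | (a, b) \in S].

Lemma row_C (T1 T2 : finType) (S : {set T1 * T2}) b : row (~: S) b = ~: row S b.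
Proof. by apply/setP=> x; rewrite !inE. Qed.
Lemma col_C (T1 T2 : finType) (S : {set T1 * T2}) a : col (~: S) a = ~: col S a.
Proof. by apply/setP=> x; rewrite !inE. Qed.

Lemma deg_prod (T1 T2 : finType) (e1 : rel T1) (e2 : rel T2)
  (irr1 : irreflexive e1) (irr2 : irreflexive e2) (S : {set T1 * T2}) a b :
  deg_in (cart_rel e1 e2) S (a, b) = deg_in e1 (row S b) a + deg_in e2 (col S a) b.
Proof.
rewrite /deg_in -(cardsID [set u : T1 * T2 | u.2 == b]).
have -> : [set u in S | cart_rel e1 e2 (a, b) u] :&: [set u : T1 * T2 | u.2 == b]
   = (fun a' => (a', b)) @: [set a' in row S b | e1 a a'].
  apply/setP=> -[x y]; rewrite !inE /cart_rel /=; apply/idP/imsetP.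
    case/andP=> /andP[xyS H] /eqP yb; subst y.
    rewrite irr2 andbF eqxx /= in H.
    by exists x => //; rewrite !inE xyS H.
  case=> x'; rewrite !inE => /andP[xS ex] [-> ->].
  by rewrite xS eqxx ex orbT.
have -> : [set u in S | cart_rel e1 e2 (a, b) u] :\: [set u : T1 * T2 | u.2 == b]
   = (fun b' => (a, b')) @: [set b' in col S a | e2 b b'].
  apply/setP=> -[x y]; rewrite !inE /cart_rel /=; apply/idP/imsetP.
    case/andP=> yb /andP[xyS H].
    rewrite [b == y]eq_sym (negbTE yb) /= orbF in H; case/andP: H => /eqP ax H.
    by subst x; exists y => //; rewrite !inE xyS H.
  case=> y'; rewrite !inE => /andP[yS ey] [-> ->].
  have yb : y' != b by apply: contraTneq ey => ->; rewrite irr2.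
  by rewrite yb yS eqxx ey.
rewrite !card_imset //; first by move=> u v [].
by move=> u v [].
Qed.

Lemma mem_zip2 (S T : eqType) (s : seq S) (t : seq T) x y :
  (x, y) \in zip s t -> (x \in s) /\ (y \in t).
Proof.
elim: s t => [|a s IH] [|b t] //=.
rewrite in_cons => /orP[/eqP [-> ->]|h]; first by rewrite !in_cons !eqxx.
by have [h1 h2] := IH _ h; rewrite !in_cons h1 h2 !orbT.
Qed.

Lemma zip_fst (S T : eqType) (s : seq S) (t : seq T) (d : S) x y :
  uniq t -> (x, y) \in zip s t -> x = nth d s (index y t).
Proof.
elim: s t => [|a s IH] [|b t] //=.
case/andP=> bt ut; rewrite in_cons => /orP[/eqP [-> ->]|h]; first by rewrite eqxx.
have [_ yt] := mem_zip2 h.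
have yb : b != y by apply: contraNneq bt => ->.
by rewrite (negbTE yb) /=; apply: IH.
Qed.

Lemma zip_snd (S T : eqType) (s : seq S) (t : seq T) (d : T) x y :
  uniq s -> (x, y) \in zip s t -> y = nth d t (index x s).
Proof.
elim: s t => [|a s IH] [|b t] //=.
case/andP=> bt ut; rewrite in_cons => /orP[/eqP [-> ->]|h]; first by rewrite eqxx.
have [yt _] := mem_zip2 h.
have yb : a != x by apply: contraNneq bt => ->.
by rewrite (negbTE yb) /=; apply: IH.
Qed.

Lemma phi_ge (T : finType) (e : rel T) k X : paf_set e k X -> #|X| <= phi_p e k.
Proof. move=> h; rewrite /phi_p; exact: (@leq_bigmax_cond _ (paf_set e k) (fun X => #|X|) X h). Qed.

Lemma phi_ex (T : finType) (e : rel T) k : exists2 X, paf_set e k X & #|X| = phi_p e k.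
Proof.
have p0 : paf_set e k set0.
  apply/forallP=> S; apply/implyP; rewrite subset0 => /eqP ->.
  by rewrite /powerful_alliance /defensive_alliance eqxx.
have : 0 < #|paf_set e k| by apply/card_gt0P; exists set0.
case/(eq_bigmax_cond (fun X : {set T} => #|X|)) => X pX h.
by exists X => //; rewrite /phi_p h.
Qed.

Lemma part_i1 (T1 T2 : finType) (e1 : rel T1) (e2 : rel T2)
  (G1s : simple_graph e1) (G2s : simple_graph e2) (k : int) :
  #|T2| * phi_p e1 (k - (maxdeg e2)%:Z)%R <= phi_p (cart_rel e1 e2) k.
Proof.
case: G1s => _ irr1; case: G2s => _ irr2.
have [X pX <-] := phi_ex e1 (k - (maxdeg e2)%:Z)%R.
rewrite mulnC -cardsT -cardsX; apply: phi_ge.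
apply/forallP=> S; apply/implyP=> sub; apply/negP=> /andP[/andP[S0 defS] /andP[_ offS]].
case/set0Pn: S0 => -[a b] abS.
have rsub : row S b \subset X.
  apply/subsetP=> x; rewrite inE => xS; have := subsetP sub _ xS.
  by rewrite in_setX => /andP[].
move/forallP/(_ (row S b))/implyP/(_ rsub)/negP: pX; apply.
apply/andP; split; apply/andP; split.
- by apply/set0Pn; exists a; rewrite inE.
- apply/forallP=> x; apply/implyP=> xr.
  have xbS : (x, b) \in S by rewrite inE in xr.
  have h := implyP (forallP defS (x, b)) xbS.
  have d1 := deg_prod irr1 irr2 S x b.
  have d2 := deg_prod irr1 irr2 (~: S) x b.
  rewrite row_C col_C in d2.
  have m1 := deg_in_le e2 (col S x) b.
  have m2 := deg_le_max e2 b.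
  lia.
- by apply/set0Pn; exists a; rewrite inE.
- apply/forallP=> x; apply/implyP; rewrite inE in_setC => /andP[xnr /existsP[u /andP[ur exu]]].
  have hb : (x, b) \in boundary (cart_rel e1 e2) S.
    rewrite inE in_setC; apply/andP; split; first by rewrite inE in xnr.
    apply/existsP; exists (u, b); rewrite inE in ur; rewrite ur /cart_rel /= eqxx exu.
    by rewrite orbT.
  have h := implyP (forallP offS (x, b)) hb.
  have d1 := deg_prod irr1 irr2 S x b.
  have d2 := deg_prod irr1 irr2 (~: S) x b.
  rewrite row_C col_C in d2.
  have m1 := deg_in_le e2 (col S x) b.
  have m2 := deg_le_max e2 b.
  lia.
Qed.

Lemma part_i2 (T1 T2 : finType) (e1 : rel T1) (e2 : rel T2)
  (G1s : simple_graph e1) (G2s : simple_graph e2) (k : int) :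
  #|T1| * phi_p e2 (k - (maxdeg e1)%:Z)%R <= phi_p (cart_rel e1 e2) k.
Proof.
case: G1s => _ irr1; case: G2s => _ irr2.
have [X pX <-] := phi_ex e2 (k - (maxdeg e1)%:Z)%R.
rewrite -cardsT -cardsX; apply: phi_ge.
apply/forallP=> S; apply/implyP=> sub; apply/negP=> /andP[/andP[S0 defS] /andP[_ offS]].
case/set0Pn: S0 => -[a b] abS.
have rsub : col S a \subset X.
  apply/subsetP=> x; rewrite inE => xS; have := subsetP sub _ xS.
  by rewrite in_setX => /andP[].
move/forallP/(_ (col S a))/implyP/(_ rsub)/negP: pX; apply.
apply/andP; split; apply/andP; split.
- by apply/set0Pn; exists b; rewrite inE.
- apply/forallP=> x; apply/implyP=> xr.
  have xbS : (a, x) \in S by rewrite inE in xr.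
  have h := implyP (forallP defS (a, x)) xbS.
  have d1 := deg_prod irr1 irr2 S a x.
  have d2 := deg_prod irr1 irr2 (~: S) a x.
  rewrite row_C col_C in d2.
  have m1 := deg_in_le e1 (row S x) a.
  have m2 := deg_le_max e1 a.
  lia.
- by apply/set0Pn; exists b; rewrite inE.
- apply/forallP=> x; apply/implyP; rewrite inE in_setC => /andP[xnr /existsP[u /andP[ur exu]]].
  have hb : (a, x) \in boundary (cart_rel e1 e2) S.
    rewrite inE in_setC; apply/andP; split; first by rewrite inE in xnr.
    apply/existsP; exists (a, u); rewrite inE in ur; rewrite ur /cart_rel /= eqxx exu.
    by [].
  have h := implyP (forallP offS (a, x)) hb.
  have d1 := deg_prod irr1 irr2 S a x.
  have d2 := deg_prod irr1 irr2 (~: S) a x.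
  rewrite row_C col_C in d2.
  have m1 := deg_in_le e1 (row S x) a.
  have m2 := deg_le_max e1 a.
  lia.
Qed.

Lemma part_ii (T1 T2 : finType) (e1 : rel T1) (e2 : rel T2)
  (G1s : simple_graph e1) (G2s : simple_graph e2) (k1 k2 k : int) :
     (1 - (mindeg e1)%:Z <= k1)%R ->
     (1 - (mindeg e2)%:Z <= k2)%R ->
     (k1 + k2 - 1 <= k)%R ->
     phi_p e1 k1 * phi_p e2 k2
       + minn (#|T1| - phi_p e1 k1) (#|T2| - phi_p e2 k2)
     <= phi_p (cart_rel e1 e2) k.
Proof.
case: G1s => _ irr1; case: G2s => _ irr2.
move=> hk1 hk2 hk.
have [X1 pX1 <-] := phi_ex e1 k1.
have [X2 pX2 <-] := phi_ex e2 k2.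
set s1 := enum (~: X1); set s2 := enum (~: X2).
have u1 : uniq s1 by apply: enum_uniq.
have u2 : uniq s2 by apply: enum_uniq.
set M := [set u in zip s1 s2].
set Y := setX X1 X2 :|: M.
have cY : #|Y| = #|X1| * #|X2| + minn (#|T1| - #|X1|) (#|T2| - #|X2|).
  rewrite /Y cardsU cardsX.
  have -> : setX X1 X2 :&: M = set0.
    apply/setP=> -[x y]; rewrite !inE.
    apply/negbTE; apply/negP=> /andP[/andP[xX _] xyM].
    have [h _] := mem_zip2 xyM; by rewrite mem_enum inE xX in h.
  rewrite cards0 subn0 /M cardsE (elimT card_uniqP (zip_uniql s2 u1)) size_zip.
  have c1 := cardsC X1; have c2 := cardsC X2.
  rewrite /s1 /s2 -!cardE; lia.
rewrite -cY; apply: phi_ge.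
apply/forallP=> S; apply/implyP=> sub; apply/negP=> /andP[/andP[S0 defS] /andP[_ offS]].
have defv : forall a b, (a, b) \in S ->
   ((deg_in (cart_rel e1 e2) (~: S) (a, b))%:Z + k <= (deg_in (cart_rel e1 e2) S (a, b))%:Z)%R.
  by move=> a b h; exact: (implyP (forallP defS (a, b)) h).
have offv : forall a b, (a, b) \in boundary (cart_rel e1 e2) S ->
   ((deg_in (cart_rel e1 e2) (~: S) (a, b))%:Z + (k + 2) <= (deg_in (cart_rel e1 e2) S (a, b))%:Z)%R.
  by move=> a b h; exact: (implyP (forallP offS (a, b)) h).
have dp := deg_prod irr1 irr2.
have dpC : forall a b, deg_in (cart_rel e1 e2) (~: S) (a, b)
    = deg_in e1 (~: row S b) a + deg_in e2 (~: col S a) b.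
  by move=> a b; rewrite dp row_C col_C.
have subX : forall a b, (a, b) \in S -> (a \in X1) && (b \in X2).
  move=> a b abS; have := subsetP sub _ abS; rewrite /Y !inE => /orP[// | abM].
  exfalso.
  have [as1 bs2] := mem_zip2 abM.
  rewrite mem_enum inE in as1; rewrite mem_enum inE in bs2.
  have rs : row S b \subset [set a].
    apply/subsetP=> x; rewrite !inE => xbS.
    have := subsetP sub _ xbS; rewrite /Y !inE => /orP[/andP[_ bX2] | xbM].
      by rewrite bX2 in bs2.
    by rewrite (zip_fst a u2 xbM) -(zip_fst a u2 abM).
  have cs : col S a \subset [set b].
    apply/subsetP=> y; rewrite !inE => ayS.
    have := subsetP sub _ ayS; rewrite /Y !inE => /orP[/andP[aX1 _] | ayM].
      by rewrite aX1 in as1.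
    by rewrite (zip_snd b u1 ayM) -(zip_snd b u1 abM).
  have h := defv a b abS.
  rewrite !dp !row_C !col_C in h.
  have r1 := deg_in_sub e1 a rs. have r2 := deg_in_sub e2 b cs.
  have rsC : ~: [set a] \subset ~: row S b by rewrite setCS.
  have csC : ~: [set b] \subset ~: col S a by rewrite setCS.
  have r3 := deg_in_sub e1 a rsC.
  have r4 := deg_in_sub e2 b csC.
  have z1 := deg_in_set1 irr1 a. have z2 := deg_in_set1 irr2 b.
  have w1 := deg_in_setC1 irr1 a. have w2 := deg_in_setC1 irr2 b.
  have m1 := mindeg_le e1 a. have m2 := mindeg_le e2 b.
  clear -h r1 r2 r3 r4 z1 z2 w1 w2 m1 m2 hk hk1 hk2; lia.
set A := [set a | [exists b, (a, b) \in S]].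
have rowA : forall b, row S b \subset A.
  by move=> b; apply/subsetP=> x; rewrite !inE => h; apply/existsP; exists b.
have rowAC : forall b, ~: A \subset ~: row S b by move=> b; rewrite setCS.
have A0 : A != set0.
  case/set0Pn: S0 => -[a b] abS; apply/set0Pn; exists a; rewrite inE.
  by apply/existsP; exists b.
case: (boolP [forall a in A,
   ((deg_in e1 (~: A) a)%:Z + k1 <= (deg_in e1 A a)%:Z)%R]) => hP.
- have AX : A \subset X1.
    apply/subsetP=> a; rewrite inE => /existsP[b abS].
    by case/andP: (subX _ _ abS).
  move/forallP/(_ A)/implyP/(_ AX)/negP: pX1; apply.
  rewrite /powerful_alliance /defensive_alliance /offensive_alliance A0 hP /=.
  apply/forallP=> a'; apply/implyP; rewrite inE in_setC.
  case/andP=> a'nA /existsP[a /andP[aA ea]].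
  have aA' := aA; rewrite inE in aA'; case/existsP: aA' => b abS.
  have hb : (a', b) \in boundary (cart_rel e1 e2) S.
    rewrite inE in_setC; apply/andP; split.
      by apply: contra a'nA => h; rewrite inE; apply/existsP; exists b.
    apply/existsP; exists (a, b); rewrite abS /cart_rel /= eqxx ea.
    by rewrite orbT.
  have h := offv _ _ hb.
  have c0 : col S a' = set0.
    apply/setP=> y; rewrite !inE; apply/negbTE.
    by apply: contra a'nA => h'; rewrite inE; apply/existsP; exists y.
  rewrite !dp !row_C !col_C c0 in h.
  have r1 := deg_in_sub e1 a' (rowA b).
  have r2 := deg_in_sub e1 a' (rowAC b).
  have z := deg_in_set0 e2 b. have w := deg_in_setT e2 b.
  have m := mindeg_le e2 b.
  clear -h r1 r2 z w m hk hk2; lia.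
- move/forallPn: hP => [a]; rewrite negb_imply => /andP[aA ha].
  have CX : col S a \subset X2.
    apply/subsetP=> b; rewrite inE => abS.
    by case/andP: (subX _ _ abS).
  move/forallP/(_ (col S a))/implyP/(_ CX)/negP: pX2; apply.
  have C0 : col S a != set0.
    rewrite inE in aA; case/existsP: aA => b abS.
    by apply/set0Pn; exists b; rewrite inE.
  rewrite /powerful_alliance /defensive_alliance /offensive_alliance C0 /=.
  apply/andP; split.
    apply/forallP=> b; apply/implyP=> bC.
    have abS : (a, b) \in S by rewrite inE in bC.
    have h := defv _ _ abS.
    rewrite !dp !row_C !col_C in h.
    have r1 := deg_in_sub e1 a (rowA b).
    have r2 := deg_in_sub e1 a (rowAC b).
    clear -h r1 r2 ha hk; lia.
  apply/forallP=> b'; apply/implyP; rewrite inE in_setC.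
  case/andP=> b'nC /existsP[b /andP[bC eb]].
  have hb : (a, b') \in boundary (cart_rel e1 e2) S.
    rewrite inE in_setC; apply/andP; split.
      by rewrite inE in b'nC.
    apply/existsP; exists (a, b); rewrite inE in bC; rewrite bC /cart_rel /= eqxx eb.
    by [].
  have h := offv _ _ hb.
  rewrite !dp !row_C !col_C in h.
  have r1 := deg_in_sub e1 a (rowA b').
  have r2 := deg_in_sub e1 a (rowAC b').
  clear -h r1 r2 ha hk; lia.
Qed.

Theorem corollary5 (T1 T2 : finType) (e1 : rel T1) (e2 : rel T2)
  (G1s : simple_graph e1) (G2s : simple_graph e2) :
  (* (i) with i = 1, j = 2 *)
  (forall k : int,
     ((maxdeg e2)%:Z - (maxdeg e1)%:Z <= k)%R ->
     (k <= (maxdeg e1)%:Z + (maxdeg e2)%:Z - 2)%R ->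
     #|T2| * phi_p e1 (k - (maxdeg e2)%:Z)%R <= phi_p (cart_rel e1 e2) k) /\
  (* (i) with i = 2, j = 1 *)
  (forall k : int,
     ((maxdeg e1)%:Z - (maxdeg e2)%:Z <= k)%R ->
     (k <= (maxdeg e2)%:Z + (maxdeg e1)%:Z - 2)%R ->
     #|T1| * phi_p e2 (k - (maxdeg e1)%:Z)%R <= phi_p (cart_rel e1 e2) k) /\
  (* (ii) *)
  (forall k1 k2 k : int,
     (1 - (mindeg e1)%:Z <= k1)%R -> (k1 <= (maxdeg e1)%:Z - 2)%R ->
     (1 - (mindeg e2)%:Z <= k2)%R -> (k2 <= (maxdeg e2)%:Z - 2)%R ->
     (k1 + k2 - 1 <= k)%R -> (k <= (maxdeg e1)%:Z + (maxdeg e2)%:Z - 2)%R ->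
     phi_p e1 k1 * phi_p e2 k2
       + minn (#|T1| - phi_p e1 k1) (#|T2| - phi_p e2 k2)
     <= phi_p (cart_rel e1 e2) k).
Proof.
split; first by move=> k _ _; exact: part_i1.
split; first by move=> k _ _; exact: part_i2.
by move=> k1 k2 k h1 _ h2 _ h3 _; exact: part_ii.
Qed.
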